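(* Let $n\geq 1$ and let $C$ be a $2$-null CRC in $G_n$ with covering radius $\rho\geq 2$, $c_1=1$ and $c_2=2$. Then there is a CRC $D$ in the binary Hamming graph $H(2n,2)$ with the same parameter matrix as $C$ such that $C=\{x\in\mathbb{Z}^n: (\tau(x_1 \bmod 4),\ldots,\tau(x_n\bmod 4))\in D\}$. In particular, $C$ is invariant under translation by $4e_i$ for every $i$.
   Context: $G_n$ is the graph with vertex set $\mathbb{Z}^n$, $x\sim y$ iff $\sum_i|x_i-y_i|=1$; $e_i$ is the $i$-th unit vector. For a code $C$ with covering radius $\rho=\max_v d(v,C)$, $C_i=\{v:d(v,C)=i\}$. $C$ is a completely regular code (CRC) if for all $i,j$ every vertex of $C_i$ has the same number $\alpha_{ij}$ of neighbours in $C_j$, with $\alpha_{ij}=0$ for $|i-j|>1$; $a_i=\alpha_{ii}$, $b_i=\alpha_{i,i+1}$, $c_i=\alpha_{i,i-1}$, and the parameter matrix is $(\alpha_{ij})$. $C$ is $r$-null if $a_0=\cdots=a_{r-1}=0$. The same notions apply in any graph, e.g. in the Hamming graph $H(2n,2)$ on $\{0,1\}^{2n}$ (adjacent iff differing in exactly one coordinate). $\tau:\{0,1,2,3\}\to\{0,1\}^2$ is the Gray map $\tau(0)=(00)$, $\tau(1)=(10)$, $\tau(2)=(11)$, $\tau(3)=(01)$, and $(\tau(y_1),\ldots,\tau(y_n))$ denotes the concatenation in $\{0,1\}^{2n}$. *)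

(* Defs.v *)
From HB Require Import structures.
From mathcomp Require Import all_boot all_order all_algebra.
Set Implicit Arguments. Unset Strict Implicit. Unset Printing Implicit Defensive.
Import Order.TTheory GRing.Theory Num.Theory.

Section Generic.
Variable V : eqType.
Variable adj : rel V.

Definition walk (x y : V) (k : nat) : Prop :=
  exists p : seq V, [/\ size p = k, path adj x p & last x p = y].

Definition dist_to (C : V -> Prop) (v : V) (i : nat) : Prop :=
  (exists c, C c /\ walk v c i) /\
  (forall c j, C c -> walk v c j -> i <= j).

Definition covering_radius (C : V -> Prop) (rho : nat) : Prop :=
  (forall v, exists i, i <= rho /\ dist_to C v i) /\
  (exists v, dist_to C v rho).

Definition has_count (P : V -> Prop) (a : nat) : Prop :=
  exists s : seq V, [/\ uniq s, size s = a & forall y, y \in s <-> P y].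

Definition CRC_with (C : V -> Prop) (rho : nat) (alpha : nat -> nat -> nat) : Prop :=
  [/\ covering_radius C rho,
      (forall i j v, i <= rho -> j <= rho -> dist_to C v i ->
         has_count (fun y => adj v y /\ dist_to C y j) (alpha i j)) &
      (forall i j, i <= rho -> j <= rho -> (i.+1 < j \/ j.+1 < i) -> alpha i j = 0)].

End Generic.

Definition Zvec (n : nat) := {ffun 'I_n -> int}.

Definition Gadj (n : nat) : rel (Zvec n) :=
  fun x y => (\sum_(i < n) absz (x i - y i)%R)%N == 1%N.

Definition shift4 (n : nat) (i : 'I_n) (x : Zvec n) : Zvec n :=
  [ffun j => (x j + (if j == i then 4 else 0))%R].

Definition Bvec (m : nat) := {ffun 'I_m -> bool}.

Definition Hadj (m : nat) : rel (Bvec m) :=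
  fun x y => #|[pred k | x k != y k]| == 1%N.

(* tau(0)=(00), tau(1)=(10), tau(2)=(11), tau(3)=(01), applied to z mod 4 *)
Definition tau (z : int) : bool * bool :=
  let m := absz (z %% 4)%Z in ((m == 1%N) || (m == 2%N), (m == 2%N) || (m == 3%N)).

Lemma half_ord_proof (n : nat) (k : 'I_(2 * n)) : k %/ 2 < n.
Proof. by rewrite ltn_divLR // [n * 2]mulnC ltn_ord. Qed.

Definition half_ord (n : nat) (k : 'I_(2 * n)) : 'I_n := Ordinal (half_ord_proof k).

(* (tau(x_1 mod 4), ..., tau(x_n mod 4)) in {0,1}^{2n}: coordinates 2i, 2i+1
   (0-based) hold the two bits of tau(x_i mod 4) *)
Definition gray (n : nat) (x : Zvec n) : Bvec (2 * n) :=
  [ffun k : 'I_(2 * n) =>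
     let t := tau (x (half_ord k)) in if odd k then t.2 else t.1].

(* Main.v *)
Require Import Defs.
From mathcomp Require Import all_boot all_order all_algebra zify.
Import Order.TTheory GRing.Theory Num.Theory.
Set Implicit Arguments. Unset Strict Implicit. Unset Printing Implicit Defensive.

Definition mv n (x : Zvec n) (k : 'I_n) (d : int) : Zvec n :=
  [ffun j => (x j + (if j == k then d else 0))%R].

Lemma mv_mv n (x : Zvec n) k a b : mv (mv x k a) k b = mv x k (a + b)%R.
Proof. apply/ffunP => j; rewrite !ffunE; case: (j == k); lia. Qed.

Lemma mv0 n (x : Zvec n) k : mv x k 0%R = x.
Proof. apply/ffunP => j; rewrite !ffunE; by case: (j == k) => /=; rewrite addr0. Qed.

Lemma mv_comm n (x : Zvec n) k a l b : mv (mv x k a) l b = mv (mv x l b) k a.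
Proof. apply/ffunP => j; rewrite !ffunE; case: (j == k); case: (j == l) => /=; lia. Qed.

Lemma Gadj_mv n (x : Zvec n) k d : absz d = 1%N -> Gadj x (mv x k d).
Proof.
move=> hd; rewrite /Gadj (bigD1 k) //= big1 => [|j hj]; rewrite ffunE ?eqxx.
  apply/eqP; lia.
by rewrite (negbTE hj); lia.
Qed.

Lemma Gadj_inv n (x y : Zvec n) : Gadj x y -> exists k d, absz d = 1%N /\ y = mv x k d.
Proof.
rewrite /Gadj => /eqP hs.
have [k hk]: exists k, absz (x k - y k)%R != 0%N.
  case: (pickP (fun k => absz (x k - y k)%R != 0%N)) => [k hk|h0]; first by exists k.
  have : (\sum_(i<n) absz (x i - y i)%R = 0)%N.
    by apply: big1 => j _; apply/eqP; exact: negbFE (h0 j).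
  by rewrite hs.
move: hs; rewrite (bigD1 k) //= => hs.
move: hs; set S := (\sum_(i | _) _)%N => hs.
have h0 : S = 0%N by lia.
exists k, (y k - x k)%R; split; first lia.
apply/ffunP => j; rewrite ffunE; case: (eqVneq j k) => [->|hj]; first by rewrite ?eqxx /=; lia.
move: h0; rewrite /S (bigD1 j) //=; lia.
Qed.

Lemma Gsym n (x y : Zvec n) : Gadj x y = Gadj y x.
Proof. rewrite /Gadj; congr (_ == _); apply eq_bigr => i _; lia. Qed.

Definition flip m (b : Bvec m) kk : Bvec m := [ffun j => if j == kk then ~~ b j else b j].

Lemma Hadj_flip m (b : Bvec m) kk : Hadj b (flip b kk).
Proof.
rewrite /Hadj (@eq_card1 _ kk) // => j; rewrite !inE ffunE.
by case: (j =P kk) => _; case: (b j).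
Qed.

Lemma Hadj_inv m (b b' : Bvec m) : Hadj b b' -> exists kk, b' = flip b kk.
Proof.
move/eqP/mem_card1 => [kk hkk]; exists kk; apply/ffunP => j; rewrite ffunE.
have := hkk j; rewrite !inE; case: (j =P kk) => [->|_] /=.
  by case: (b kk); case: (b' kk).
by case: (b j); case: (b' j).
Qed.

Lemma flip_inj m (g : Bvec m) a a' : flip g a = flip g a' -> a = a'.
Proof.
move=> h; have := congr1 (fun f : Bvec m => f a) h; rewrite !ffunE eqxx.
by case: (a =P a') => // _; case: (g a).
Qed.

Definition r4 (z : int) : nat := absz (z %% 4)%Z.
Definition taun (m : nat) : bool * bool := ((m == 1%N) || (m == 2%N), (m == 2%N) || (m == 3%N)).
Lemma tauE z : tau z = taun (r4 z). Proof. by []. Qed.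
Lemma r4_lt z : (r4 z < 4)%N. Proof. rewrite /r4; lia. Qed.
Lemma r4_p1 z : r4 (z + 1)%R = ((r4 z).+1 %% 4)%N. Proof. rewrite /r4; lia. Qed.
Lemma r4_m1 z : r4 (z - 1)%R = ((r4 z + 3) %% 4)%N. Proof. rewrite /r4; lia. Qed.

Lemma taun_inj m m' : (m < 4)%N -> (m' < 4)%N -> taun m = taun m' -> m = m'.
Proof. by case: m => [|[|[|[|]]]] // _; case: m' => [|[|[|[|]]]]. Qed.

Lemma bidx_proof n (k : 'I_n) (b : bool) : (2 * k + b < 2 * n)%N.
Proof. have := ltn_ord k; case: b => /=; lia. Qed.
Definition bidx n (k : 'I_n) (b : bool) : 'I_(2 * n) := Ordinal (bidx_proof k b).

Lemma half_bidx n (k : 'I_n) b : half_ord (bidx k b) = k.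
Proof. apply/val_inj => /=; case: b => /=; lia. Qed.
Lemma odd_bidx n (k : 'I_n) b : odd (bidx k b) = b.
Proof. by rewrite /= oddD oddM /=; case: b. Qed.
Lemma bidx_half n (j : 'I_(2 * n)) : bidx (half_ord j) (odd j) = j.
Proof.
apply/val_inj => /=; have := odd_double_half j; rewrite -divn2.
case: (odd j) => /=; lia.
Qed.
Lemma bidx_inj n (k k' : 'I_n) b b' : bidx k b = bidx k' b' -> k = k' /\ b = b'.
Proof.
move=> h; split; first by rewrite -(half_bidx k b) h half_bidx.
by rewrite -(odd_bidx k b) h odd_bidx.
Qed.
Lemma bidx_eq n (k : 'I_n) b b' : (bidx k b == bidx k b') = (b == b').
Proof. by apply/eqP/eqP => [/bidx_inj []|->]. Qed.

Lemma gray_eq n (x y : Zvec n) : gray x = gray y -> forall j, r4 (x j) = r4 (y j).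
Proof.
move=> h j.
have h1 := congr1 (fun g : Bvec (2 * n) => g (bidx j false)) h.
have h2 := congr1 (fun g : Bvec (2 * n) => g (bidx j true)) h.
rewrite /= !ffunE !half_bidx !odd_bidx /= in h1 h2.
apply: taun_inj; try exact: r4_lt.
by rewrite /taun /r4; congr pair.
Qed.

Lemma Gflip n (x : Zvec n) k d : absz d = 1%N ->
  gray (mv x k d) = flip (gray x) (bidx k (odd (r4 (x k)) (+) (d != 1%R))).
Proof.
move=> hd; apply/ffunP => j; rewrite !ffunE.
case: (half_ord j =P k) => [hj|hj].
  rewrite hj -[X in X == _](bidx_half j) hj bidx_eq !tauE.
  have [->|->] : d = 1%R \/ d = (-1)%R by lia.
    rewrite r4_p1 /=; have := r4_lt (x k).
    by case: (r4 (x k)) => [|[|[|[|]]]] //= _; case: (odd j).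
  rewrite r4_m1 /=; have := r4_lt (x k).
  by case: (r4 (x k)) => [|[|[|[|]]]] //= _; case: (odd j).
rewrite addr0.
rewrite (_ : (j == bidx k _) = false) ?addr0 //.
by apply/eqP => hjb; apply: hj; rewrite hjb half_bidx.
Qed.

Lemma gray_adj n (x y : Zvec n) : Gadj x y -> Hadj (gray x) (gray y).
Proof. by move/Gadj_inv => [k [d [hd ->]]]; rewrite Gflip //; apply: Hadj_flip. Qed.

Lemma gray_lift n (x : Zvec n) b : Hadj (gray x) b -> exists y, Gadj x y /\ gray y = b.
Proof.
move/Hadj_inv => [kk ->].
set k := half_ord kk.
pose d : int := if odd (r4 (x k)) == odd kk then 1%R else (-1)%R.
have hd : absz d = 1%N by rewrite /d; case: (_ == _).
exists (mv x k d); split; first exact: Gadj_mv.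
rewrite Gflip //; congr flip; rewrite -[RHS](bidx_half kk); congr bidx.
by rewrite /d; case: (odd (r4 _)); case: (odd kk).
Qed.

Lemma gray_inj n (x y y' : Zvec n) : Gadj x y -> Gadj x y' -> gray y = gray y' -> y = y'.
Proof.
move/Gadj_inv => [k [d [hd ->]]] /Gadj_inv [k' [d' [hd' ->]]].
rewrite !Gflip // => /flip_inj /bidx_inj [hk hb]; subst k'.
have : (d != 1%R) = (d' != 1%R).
  by move: hb; case: (odd _); case: (d != 1%R); case: (d' != 1%R).
case: (d =P 1%R); case: (d' =P 1%R) => //= h1 h2 _; congr mv; lia.
Qed.

Definition code (b1 b2 : bool) : int :=
  match b1, b2 with
  | false, false => 0 | true, false => 1 | true, true => 2 | false, true => 3 end.

Lemma gray_surj n (b : Bvec (2 * n)) : exists x : Zvec n, gray x = b.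
Proof.
exists [ffun i => code (b (bidx i false)) (b (bidx i true))].
apply/ffunP => j; rewrite !ffunE.
rewrite -[in RHS](bidx_half j).
case: (odd j); case: (b (bidx _ false)); case: (b (bidx _ true)); by [].
Qed.

Lemma walk_gray n (x y : Zvec n) k :
  walk (@Gadj n) x y k -> walk (@Hadj (2 * n)) (gray x) (gray y) k.
Proof.
move=> [p [hs hp hl]]; exists (map (@gray n) p); split.
- by rewrite size_map.
- elim: p x hp {hs hl} => //= a p IH x /andP [hxa hp].
  by rewrite gray_adj // IH.
- by rewrite last_map hl.
Qed.

Lemma walk_lift n (x : Zvec n) b k :
  walk (@Hadj (2 * n)) (gray x) b k -> exists y, gray y = b /\ walk (@Gadj n) x y k.
Proof.
move=> [p [hs hp hl]].
elim: p x k hs hp hl => [|a p IH] x k /= hs hp hl.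
  by exists x; split => //; exists [::]; split.
move: hp => /andP [hxa hp].
have [y1 [hy1 hga]] := gray_lift hxa; subst a.
have [y [hy [q [hq1 hq2 hq3]]]] := IH y1 (size p) erefl hp hl.
exists y; split => //; exists (y1 :: q); split => //=.
- by rewrite hq1.
- by rewrite hy1.
Qed.

Definition Dof n (C : Zvec n -> Prop) (b : Bvec (2 * n)) : Prop :=
  exists x, gray x = b /\ C x.

Section Transfer.
Variables (n : nat) (C : Zvec n -> Prop).
Hypothesis hper : forall x y, gray x = gray y -> C x -> C y.

Lemma CD x : C x <-> Dof C (gray x).
Proof. split; first by exists x. by move=> [y [hy hc]]; apply: hper hc. Qed.

Lemma distT x i : dist_to (@Hadj (2 * n)) (Dof C) (gray x) i <-> dist_to (@Gadj n) C x i.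
Proof.
split.
  move=> [[d [[c [hcd hc]] hw]] hmin]; split.
    have [y [hy hw']] := walk_lift hw; exists y; split => //.
    by apply: hper hc; rewrite hcd hy.
  move=> c0 j hc0 hw0; apply: hmin (walk_gray hw0); exact/CD.
move=> [[c [hc hw]] hmin]; split.
  by exists (gray c); split; [exact/CD | exact: walk_gray].
move=> d j [y [hyd hy]] hw1.
have [z [hz hw1']] := walk_lift hw1; apply: hmin hw1'.
by apply: hper hy; rewrite hyd hz.
Qed.

Lemma countT (x : Zvec n) (j : nat) (a : nat) :
  @Defs.has_count (Zvec n) (fun y : Zvec n => Gadj x y /\ dist_to (@Gadj n) C y j) a ->
  @Defs.has_count (Bvec (2 * n)) (fun b : Bvec (2 * n) => Hadj (gray x) b /\ dist_to (@Hadj (2 * n)) (Dof C) b j) a.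
Proof.
move=> [s [hu hs hm]]; exists (map (@gray n) s); split.
- rewrite map_inj_in_uniq // => y y' hy1 hy2.
  have [hy _] := (hm y).1 hy1; have [hy' _] := (hm y').1 hy2; exact: (gray_inj hy hy').
- by rewrite size_map.
move=> b; split.
  move=> /mapP [y /hm [hxy hdy] ->]; split; first exact: gray_adj.
  exact/distT.
move=> [hb hd]; have [y [hxy hyb]] := gray_lift hb; subst b.
by apply: map_f; apply/hm; split => //; apply/distT.
Qed.

End Transfer.

Lemma hc0 (V : eqType) (P : V -> Prop) y : Defs.has_count P 0 -> P y -> False.
Proof. by move=> [[|? ?] [_ // _ hm]] /hm. Qed.

Lemma hc1 (V : eqType) (P : V -> Prop) a b : Defs.has_count P 1 -> P a -> P b -> a = b.
Proof.
move=> [[|z [|? ?]] [_ // _ hm]] /hm; rewrite inE => /eqP -> /hm.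
by rewrite inE => /eqP ->.
Qed.

Lemma hc1ex (V : eqType) (P : V -> Prop) : Defs.has_count P 1 -> exists a, P a.
Proof. move=> [[|z [|? ?]] [_ // _ hm]]; exists z; apply/hm; exact: mem_head. Qed.

Lemma hc2 (V : eqType) (P : V -> Prop) a b c : Defs.has_count P 2 -> P a -> P b -> P c ->
  a <> b -> a <> c -> b <> c -> False.
Proof.
move=> [[|z1 [|z2 [|? ?]]] [_ // _ hm]] /hm ha /hm hb /hm hc.
move: ha hb hc; rewrite !inE.
by case/orP => /eqP -> ; case/orP => /eqP -> ; case/orP => /eqP ->.
Qed.

Lemma hc2ex (V : eqType) (P : V -> Prop) a : Defs.has_count P 2 -> P a ->
  exists b, P b /\ b <> a.
Proof.
move=> [[|z1 [|z2 [|? ?]]] [hu // _ hm]] ha.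
move: hu; rewrite /= inE andbT => hz.
case: (eqVneq a z1) => [->|hne].
  exists z2; split; first by apply/hm; rewrite !inE eqxx orbT.
  by move=> h; rewrite h eqxx in hz.
exists z1; split; first by apply/hm; rewrite !inE eqxx.
by move=> h; rewrite h eqxx in hne.
Qed.

Section Local.
Variables (n : nat) (C : Zvec n -> Prop) (rho : nat) (alpha : nat -> nat -> nat).
Hypothesis hcov : covering_radius (@Gadj n) C rho.
Hypothesis hcnt : forall i j v, i <= rho -> j <= rho -> dist_to (@Gadj n) C v i ->
  Defs.has_count (fun y => Gadj v y /\ dist_to (@Gadj n) C y j) (alpha i j).
Hypothesis hrho : 2 <= rho.
Hypothesis a00 : alpha 0 0 = 0.
Hypothesis a11 : alpha 1 1 = 0.
Hypothesis a10 : alpha 1 0 = 1.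
Hypothesis a21 : alpha 2 1 = 2.

Local Notation dist := (dist_to (@Gadj n) C).

Lemma dist_uniq v i j : dist v i -> dist v j -> i = j.
Proof.
move=> [[c [hc hw]] hmin] [[c' [hc' hw']] hmin'].
by apply/eqP; rewrite eqn_leq (hmin _ _ hc' hw') (hmin' _ _ hc hw).
Qed.

Lemma C_dist0 c : C c -> dist c 0.
Proof. by move=> hc; split => // ; exists c; split => //; exists [::]. Qed.

Lemma dist0_C v : dist v 0 -> C v.
Proof. by move=> [[c [hc [p [hs _ hl]]]] _]; case: p hs hl => // _ /= ->. Qed.

Lemma dist_step v y d e : Gadj v y -> dist y d -> dist v e -> e <= d.+1.
Proof.
move=> hvy [[c [hc [p [hs hp hl]]]] _] [_ hmin].
apply: (hmin c) => //; exists (y :: p); split => //=; first by rewrite hs.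
by rewrite hvy.
Qed.

Lemma F_nbC c y : C c -> Gadj c y -> ~ C y.
Proof.
move=> hc hcy hy; have := hcnt (v:=c) (i:=0) (j:=0) (leq0n _) (leq0n _) (C_dist0 hc).
rewrite a00 => h; apply: (hc0 h); split; [exact: hcy | exact: C_dist0].
Qed.

Lemma F_d1 c y : C c -> Gadj c y -> dist y 1.
Proof.
move=> hc hcy; have [d [hd hdy]] := hcov.1 y.
have : d <= 1 by apply: (dist_step (y := c)) hdy; [rewrite Gsym | exact: C_dist0].
case: d hd hdy => [|[|//]] // _ hdy _.
by case: (F_nbC hc hcy (dist0_C hdy)).
Qed.

Lemma F_c1 y c c' : dist y 1 -> Gadj y c -> Gadj y c' -> C c -> C c' -> c = c'.
Proof.
move=> hy h1 h2 hc hc'.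
have := hcnt (j:=0) (ltnW hrho) (leq0n _) hy; rewrite a10 => h.
by apply: (hc1 h); split => //; apply: C_dist0.
Qed.

Lemma F_a1 y z : dist y 1 -> Gadj y z -> dist z 1 -> False.
Proof.
move=> hy hyz hz; have := hcnt (j:=1) (ltnW hrho) (ltnW hrho) hy; rewrite a11 => h.
exact: hc0 h (conj hyz hz).
Qed.

Lemma F_d2 y v : dist y 1 -> Gadj y v -> ~ C v -> dist v 2.
Proof.
move=> hy hyv hnv; have [d [hd hdv]] := hcov.1 v.
have : d <= 2 by apply: (dist_step (y := y)) hdv => //; rewrite Gsym.
case: d hd hdv => [|[|[|//]]] // _ hdv _.
  by case: (hnv (dist0_C hdv)).
by case: (F_a1 hy hyv hdv).
Qed.

Lemma F_c2 v : dist v 2 ->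
  Defs.has_count (fun y => Gadj v y /\ dist y 1) 2.
Proof. by move=> hv; rewrite -a21; apply: hcnt hrho (ltnW hrho) hv. Qed.

Lemma F_C1ex y : dist y 1 -> exists c, Gadj y c /\ C c.
Proof.
move=> hy; have := hcnt (j:=0) (ltnW hrho) (leq0n _) hy; rewrite a10.
by move/hc1ex => [c [h1 h2]]; exists c; split => //; apply: dist0_C.
Qed.

Lemma per4 c i s : absz s = 1 -> C c -> C (mv c i (4 * s)%R).
Proof.
move=> hs hc.
have hca1 : Gadj c (mv c i s) := Gadj_mv c i hs.
have h12 : Gadj (mv c i s) (mv (mv c i s) i s) := Gadj_mv _ i hs.
have ha1 : dist (mv c i s) 1 := F_d1 hc hca1.
have h1c : Gadj (mv c i s) c by rewrite Gsym.
have hna2 : ~ C (mv (mv c i s) i s).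
  move=> h2; have := F_c1 ha1 h1c h12 hc h2.
  move/ffunP/(_ i); rewrite !ffunE eqxx /=; lia.
have ha2 : dist (mv (mv c i s) i s) 2 := F_d2 ha1 h12 hna2.
have bad : forall k t, k != i -> absz t = 1 -> ~ dist (mv (mv (mv c i s) i s) k t) 1.
  move=> k t hki ht hu.
  have hik : (i == k) = false by rewrite eq_sym (negbTE hki).
  have hb : dist (mv c k t) 1 := F_d1 hc (Gadj_mv c k ht).
  have h1v : Gadj (mv c i s) (mv (mv c i s) k t) := Gadj_mv _ k ht.
  have hnv : ~ C (mv (mv c i s) k t).
    move=> hv; have := F_c1 ha1 h1c h1v hc hv.
    move/ffunP/(_ k); rewrite !ffunE eqxx (negbTE hki) /=; lia.
  have hv2 := F_d2 ha1 h1v hnv.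
  have hvb : Gadj (mv (mv c i s) k t) (mv c k t).
    by rewrite Gsym mv_comm; apply: Gadj_mv.
  have hvu : Gadj (mv (mv c i s) k t) (mv (mv (mv c i s) i s) k t).
    by rewrite [X in Gadj _ X]mv_comm; apply: Gadj_mv.
  have hv1 : Gadj (mv (mv c i s) k t) (mv c i s) by rewrite Gsym.
  apply: (hc2 (F_c2 hv2) (conj hv1 ha1) (conj hvb hb) (conj hvu hu)).
  - move/ffunP/(_ i); rewrite !ffunE eqxx hik /=; lia.
  - move/ffunP/(_ i); rewrite !ffunE eqxx hik /=; lia.
  - move/ffunP/(_ i); rewrite !ffunE eqxx hik /=; lia.
have h21 : Gadj (mv (mv c i s) i s) (mv c i s) by rewrite Gsym.
have [u [[h2u hu1] hua1]] := hc2ex (F_c2 ha2) (conj h21 ha1).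
have [k [t [ht hu]]] := Gadj_inv h2u; subst u.
have ha3 : dist (mv (mv (mv c i s) i s) i s) 1.
  case: (eqVneq k i) => [hki|hki]; last by case: (bad k t hki ht hu1).
  subst k; have [ht'|ht'] : t = s \/ t = (- s)%R by lia.
    by rewrite ht' in hu1.
  by exfalso; apply: hua1; rewrite ht' mv_mv addrN mv0.
have [c' [h3c hc']] := F_C1ex ha3.
have [k' [t' [ht' hc'e]]] := Gadj_inv h3c; subst c'.
case: (eqVneq k' i) => [hki|hki].
  subst k'; have [ht2|ht2] : t' = s \/ t' = (- s)%R by lia.
    move: hc'; rewrite ht2 !mv_mv.
    by have -> : (s + (s + (s + s)) = 4 * s)%R by lia.
  by exfalso; apply: hna2; move: hc'; rewrite ht2 mv_mv addrN mv0.
exfalso.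
have hw : Gadj (mv (mv (mv (mv c i s) i s) i s) k' t') (mv (mv (mv c i s) i s) k' t').
  by rewrite Gsym [X in Gadj _ X]mv_comm; apply: Gadj_mv.
exact: (bad k' t' hki ht' (F_d1 hc' hw)).
Qed.

Lemma per_int c i q : C c -> C (mv c i (4 * q)%R).
Proof.
have key : forall m : nat, forall s, absz s = 1 -> forall x, C x -> C (mv x i (4 * (s * m%:Z)))%R.
  move=> m s hs; elim: m => [|m IH] x hx.
    by rewrite mulr0 mulr0 mv0.
  have -> : (4 * (s * m.+1%:Z) = 4 * (s * m%:Z) + 4 * s)%R by lia.
  by rewrite -mv_mv; apply: per4 => //; apply: IH.
case: q => m hc.
  by have := key m 1%R erefl c hc; rewrite mul1r.
by have := key m.+1 (-1)%R erefl c hc; rewrite NegzE mulN1r.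
Qed.

Lemma per_vec (x y : Zvec n) : (forall j, r4 (x j) = r4 (y j)) -> C x -> C y.
Proof.
move=> hr.
suff P : forall k, forall x' : Zvec n, (forall j, r4 (x' j) = r4 (y j)) ->
   (forall j : 'I_n, (k <= j)%N -> x' j = y j) -> C x' -> C y.
  by apply: (P n x hr) => j; rewrite leqNgt ltn_ord.
elim => [|k IH] x' hr' hag hx'.
  by have -> : y = x' by apply/ffunP => j; rewrite hag.
case: (ltnP k n) => hk; last first.
  apply: (IH x') => // j hj; have := ltn_ord j; lia.
set kk := Ordinal hk.
set q := ((y kk - x' kk) %/ 4)%Z.
have hq : (x' kk + 4 * q = y kk)%R.
  have := hr' kk; rewrite /r4 /q; lia.
apply: (IH (mv x' kk (4 * q)%R)); last exact: per_int.
  move=> j; rewrite ffunE; case: (eqVneq j kk) => [->|_] /=; first by rewrite hq.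
  by rewrite addr0.
move=> j hj; rewrite ffunE; case: (eqVneq j kk) => [->|hne] /=; first by rewrite hq.
rewrite addr0; apply: hag; move: hne hj; case: j => j hj' /= hne hj.
have : j != k by apply: contra hne => /eqP hjk; apply/eqP/val_inj => /=.
lia.
Qed.

End Local.

Theorem mainTheorem2 (n : nat) (C : Zvec n -> Prop) (rho : nat)
    (alpha : nat -> nat -> nat) :
  1 <= n ->
  CRC_with (@Gadj n) C rho alpha ->
  2 <= rho ->
  alpha 0 0 = 0 -> alpha 1 1 = 0 ->       (* 2-null: a_0 = a_1 = 0 *)
  alpha 1 0 = 1 ->                        (* c_1 = 1 *)
  alpha 2 1 = 2 ->                        (* c_2 = 2 *)
  (exists D : Bvec (2 * n) -> Prop,
      CRC_with (@Hadj (2 * n)) D rho alpha /\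
      (forall x : Zvec n, C x <-> D (gray x))) /\
  (forall (i : 'I_n) (x : Zvec n), C (shift4 i x) <-> C x).
Proof.
move=> hn [hcov hcnt hzero] hrho a00 a11 a10 a21.
have hper : forall x y, gray x = gray y -> C x -> C y.
  by move=> x y h; apply: (per_vec hcov hcnt hrho a00 a11 a10 a21); apply: gray_eq.
split.
  exists (Dof C); split.
    split.
    - split.
        move=> b; have [x <-] := gray_surj b; have [i [hi hd]] := hcov.1 x.
        by exists i; split => //; apply/(distT hper).
      have [x hx] := hcov.2; exists (gray x); exact/(distT hper).
    - move=> i j b hi hj; have [x <-] := gray_surj b => /(distT hper) hd.
      by apply: (countT hper); apply: hcnt.
    - exact: hzero.
  move=> x; exact: (CD hper).
move=> i x; rewrite (_ : shift4 i x = mv x i 4%R) //; split => h.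
  have := per_int hcov hcnt hrho a00 a11 a10 a21 i (-1)%R h.
  by rewrite mv_mv (_ : (4 + 4 * -1 = 0)%R) // mv0.
by have := per_int hcov hcnt hrho a00 a11 a10 a21 i 1%R h; rewrite mulr1.
Qed.
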